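(* Let $\Delta>0$, $\sigma_m>0$ and $\rho_m\in(-1,1)$. Let $(x_m,w_m)$ be a pair of real random variables with joint probability density $$f(x_m,w_m)=\frac{1}{2\pi\sigma_m^2\sqrt{1-\rho_m^2}}\exp\!\left(-\frac{x_m^2+w_m^2-2\rho_m x_m w_m}{2\sigma_m^2(1-\rho_m^2)}\right),$$ and define $$k_m=\frac{|x_m-w_m|}{\Delta^2\left(1+\frac{(x_m+w_m)^2}{4\Delta^2}\right)^{3/2}}.$$ Then $$E\{k_m\}=\int_{-\infty}^{\infty}\int_{-\infty}^{\infty} k_m\, f(x_m,w_m)\,\mathrm{d}x_m\,\mathrm{d}w_m=\frac{4}{\pi\Delta}\sqrt{\frac{1-\rho_m}{1+\rho_m}}\int_0^{\infty}\frac{1}{(1+\eta^2)^{3/2}}\exp\!\left(-\frac{\Delta^2}{\sigma_m^2(1+\rho_m)}\eta^2\right)\mathrm{d}\eta .$$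
   Context: Setting: a signal $(y_1,\dots,y_N)$ sampled at equally spaced points with spacing $\Delta$; for $m=2,\dots,N-1$, $x_m=y_{m+1}-y_m$ and $w_m=y_m-y_{m-1}$ are modeled as jointly Gaussian, zero mean, each with variance $\sigma_m^2$ and correlation coefficient $\rho_m=\mathrm{Cov}\{x_m,w_m\}/\sigma_m^2$. The quantity $k_m$ is the finite-difference approximation at the $m$-th sample of the curvature $|y''|/(1+y'^2)^{3/2}$ of the signal. *)

(* Defs.v *)
From HB Require Import structures.
From mathcomp Require Import all_boot all_order all_algebra.
From mathcomp Require Import all_classical all_reals all_analysis.
Set Implicit Arguments. Unset Strict Implicit. Unset Printing Implicit Defensive.
Import Order.TTheory GRing.Theory Num.Theory.
Local Open Scope ring_scope.

Definition bigauss_density {R : realType} (s r : R) (z : R * R) : R :=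
  let x := z.1 in let w := z.2 in
  (2 * pi * s ^+ 2 * Num.sqrt (1 - r ^+ 2))^-1 *
  expR (- ((x ^+ 2 + w ^+ 2 - 2 * r * x * w) / (2 * s ^+ 2 * (1 - r ^+ 2)))).

Definition curv_k {R : realType} (D : R) (z : R * R) : R :=
  let x := z.1 in let w := z.2 in
  `|x - w| / (D ^+ 2 * powR (1 + (x + w) ^+ 2 / (4 * D ^+ 2)) (3 / 2)).

(* Main.v *)
Require Import Defs.
From HB Require Import structures.
From mathcomp Require Import all_boot all_order all_algebra.
From mathcomp Require Import all_classical all_reals all_analysis measurable_realfun.
From mathcomp Require Import ring lra.
Import Order.TTheory GRing.Theory Num.Theory.
Import numFieldNormedType.Exports.
Local Open Scope ring_scope.
Local Open Scope classical_set_scope.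
Section S.
Context {R : realType}.
Let mu := (@lebesgue_measure R).
Definition phi (a u : R) := `|u| * expR (- (a * u ^+ 2)).
Definition psi (D b v : R) :=
  (D ^+ 2 * powR (1 + v ^+ 2 / (4 * D ^+ 2)) (3 / 2))^-1 * expR (- (b * v ^+ 2)).

Lemma phi_ge0 a u : 0 <= phi a u.
Proof. by rewrite /phi mulr_ge0 // expR_ge0. Qed.

Lemma inner_gt0 (D v : R) : 0 < 1 + v ^+ 2 / (4 * D ^+ 2).
Proof.
have := divr_ge0 (sqr_ge0 v) (mulr_ge0 (ler0n R 4) (sqr_ge0 D)); lra.
Qed.

Lemma psi_ge0 D b v : 0 <= psi D b v.
Proof.
rewrite /psi mulr_ge0 // ?expR_ge0 // invr_ge0 mulr_ge0 // ?sqr_ge0 //.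
exact: powR_ge0.
Qed.

Lemma phi_cont a : continuous (phi a).
Proof.
move=> y; apply: cvgM; first exact: norm_continuous.
apply: continuous_comp; last exact: continuous_expR.
apply: cvgN; apply: cvgM; first exact: cvg_cst.
exact: exprn_continuous.
Qed.

Lemma powR_cont (p e : R) : 0 < p -> {for p, continuous (fun x : R => powR x e)}.
Proof.
move=> p0; apply: differentiable_continuous; apply/derivable1_diffP.
have := is_derive1_powR e p0; move=> H; exact: ex_derive.
Qed.

Lemma psi_cont D b : D != 0 -> continuous (psi D b).
Proof.
move=> D0 y; apply: cvgM; last first.
  apply: continuous_comp; last exact: continuous_expR.
  apply: cvgN; apply: cvgM; first exact: cvg_cst.
  exact: exprn_continuous.
apply: (@continuousV _ _ (fun x : R => D ^+ 2 * powR (1 + x ^+ 2 / (4 * D ^+ 2)) (3 / 2))).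
  by rewrite mulf_neq0 ?expf_neq0 // gt_eqF // powR_gt0 // inner_gt0.
apply: cvgM; first exact: cvg_cst.
apply: (@continuous_comp _ _ _ (fun v : R => 1 + v ^+ 2 / (4 * D ^+ 2)) (fun x : R => powR x (3/2))).
  apply: cvgD; first exact: cvg_cst.
  apply: cvgM; last exact: cvg_cst.
  exact: exprn_continuous.
exact: powR_cont (inner_gt0 _ _).
Qed.
Lemma affine_derive (c d : R) : (fun x : R => c * x + d)^`() = cst c.
Proof.
by apply/funext => x; rewrite derive1E derive_val /= addr0; exact: mulr1.
Qed.

Lemma affine_cvgy (c d : R) : 0 < c -> (c * x + d) @[x --> +oo] --> +oo.
Proof.
move=> c0; apply/cvgryPger => A Ar; near=> x.
rewrite -lerBlDr -ler_pdivrMl; last exact: c0.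
near: x; apply: nbhs_pinfty_ge; exact: num_real.
Unshelve. all: end_near. Qed.

Lemma affine_cvgNy (c d : R) : 0 < c -> (c * x + d) @[x --> -oo] --> -oo.
Proof.
move=> c0; apply/cvgrNyPler => A Ar; near=> x.
rewrite -lerBrDr -ler_pdivlMl; last exact: c0.
near: x; apply: nbhs_ninfty_le; exact: num_real.
Unshelve. all: end_near. Qed.

Lemma subst_affine (G : R -> R) (c d : R) : 0 < c -> continuous G ->
  (forall x, 0 <= G x) ->
  (\int[mu]_x (G x)%:E = c%:E * \int[mu]_x (G (c * x + d))%:E)%E.
Proof.
move=> c0 cG G0.
rewrite (@increasing_ge0_integration_by_substitutionT _ (fun x => c * x + d) G) //.
- rewrite affine_derive -ge0_integralZl//=.
  + apply: eq_integral => x _; by rewrite /= mulrC.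
  + apply/measurable_EFinP; apply: measurableT_comp; first exact: continuous_measurable_fun.
    by apply: measurable_funD => //; apply: measurable_funM.
  + by move=> x _; rewrite lee_fin.
  + by rewrite lee_fin ltW.
- by move=> x y xy; rewrite ltrD2r ltr_pM2l.
- by rewrite affine_derive; exact: cst_continuous.
- by rewrite affine_derive; exact: is_cvg_cst.
- by rewrite affine_derive; exact: is_cvg_cst.
- exact: affine_cvgNy.
- exact: affine_cvgy.
Qed.

Lemma even_integral (G : R -> R) : continuous G -> (forall x, 0 <= G x) ->
  (forall x, G (- x) = G x) ->
  (\int[mu]_x (G x)%:E = 2%:E * \int[mu]_(x in `[0%R, +oo[%classic) (G x)%:E)%E.
Proof.
move=> cG G0 Gev.
have mG : measurable_fun setT (EFin \o G).
  by apply/measurable_EFinP; exact: continuous_measurable_fun.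
have -> : [set: R] = `]-oo, 0] `|` `]0, +oo[.
  by rewrite -setCitvl setUv.
rewrite ge0_integral_setU //=; last 3 first.
- by rewrite -setCitvl setUv.
- by move=> x _; rewrite lee_fin.
- rewrite disj_set2E; apply/eqP; rewrite -subset0 => x []/= /[!in_itv]/=.
  by rewrite leNgt andbT => /negP.
rewrite integral_itv_obnd_cbnd; last exact: measurable_funTS.
have := @ge0_integration_by_substitutionNy R G 0.
rewrite oppr0 => ->; last 2 first.
- exact: continuous_subspaceT.
- by move=> x _.
rewrite (_ : 2%:E = 1 + 1)%E // ge0_muleDl // !mul1e; congr (_ + _)%E.
by apply: eq_integral => x _ /=; rewrite Gev.
Qed.
Lemma half_gauss_moment (a : R) : 0 < a ->
  (\int[mu]_(x in `[0%R, +oo[%classic) (x * expR (- (a * x ^+ 2)))%:E = ((2 * a)^-1)%:E)%E.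
Proof.
move=> a0.
have sE : forall y z : R, y *: z = y * z by [].
pose F x := expR (-(a * x^+2)) * (- (2 * a)^-1).
have dF (x : R) : is_derive x 1 F (x * expR (-(a * x^+2))).
  have hi : is_derive x 1 (fun x => -(a * x^+2)) (-(a * (2 * x))).
    by apply: is_derive_eq; rewrite !sE; ring.
  have h := @is_derive1_comp R expR (fun x => -(a * x^+2)) x _ _ (is_derive_expR _) hi.
  apply: is_derive_eq; rewrite !sE mulr0 add0r; field.
  by rewrite gt_eqF.
have cf : continuous (fun x : R => x * expR (- (a * x ^+ 2))).
  move=> y; apply: cvgM; first exact: cvg_id.
  apply: continuous_comp; last exact: continuous_expR.
  apply: cvgN; apply: cvgM; first exact: cvg_cst.
  exact: exprn_continuous.
rewrite (@ge0_continuous_FTC2y _ _ F 0 0).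
- by rewrite /F expr0n /= mulr0 oppr0 expR0 mul1r add0e opprK.
- by move=> x x0; rewrite mulr_ge0 // expR_ge0.
- exact: continuous_subspaceT.
- have h : expR (- (a * x ^+ 2)) @[x --> +oo] --> (0:R).
    apply: (cvg_comp (fun x => a * x ^+ 2) (fun x => expR (- x))).
      exact: gt0_cvgMry cvgr_expr2.
    exact: cvgr_expR.
  have := @cvgMr_tmp _ _ _ _ _ _ (- (2 * a)^-1) h; rewrite mul0r; apply; exact: Proper_nbhs'numFieldType_proper_filter.
- by move=> x _; exact: ex_derive.
- apply: cvg_at_right_filter.
  apply: cvgM; last exact: cvg_cst.
  apply: continuous_comp; last exact: continuous_expR.
  apply: cvgN; apply: cvgM; first exact: cvg_cst.
  exact: exprn_continuous.
- by move=> x _; rewrite derive1E derive_val.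
Qed.
End S.

Theorem proposition1 (R : realType) (D s r : R)
  (hD : 0 < D) (hs : 0 < s) (hr1 : -1 < r) (hr2 : r < 1) :
  (\int[(@lebesgue_measure R) \x (@lebesgue_measure R)]_(z in [set: R * R])
      (curv_k D z * bigauss_density s r z)%:E
   = (4 / (pi * D) * Num.sqrt ((1 - r) / (1 + r)))%:E *
     \int[@lebesgue_measure R]_(eta in `[0%R, +oo[%classic)
       ((powR (1 + eta ^+ 2) (3 / 2))^-1 *
        expR (- (D ^+ 2 / (s ^+ 2 * (1 + r))) * eta ^+ 2))%:E)%E.
Proof.
pose a := (4 * s ^+ 2 * (1 - r))^-1.
pose b := (4 * s ^+ 2 * (1 + r))^-1.
pose C := (2 * pi * s ^+ 2 * Num.sqrt (1 - r ^+ 2))^-1.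
have s0 : s != 0 by rewrite gt_eqF.
have D0 : D != 0 by rewrite gt_eqF.
have r1 : 1 - r != 0 by rewrite subr_eq0 eq_sym lt_eqF.
have r2 : 1 + r != 0 by rewrite gt_eqF // -ltrBlDl sub0r.
have r3 : 1 - r ^+ 2 != 0.
  by rewrite (_ : 1 - r ^+ 2 = (1 - r) * (1 + r)) ?mulf_neq0 //; ring.
have a0 : 0 < a.
  rewrite /a invr_gt0; apply: mulr_gt0; last lra.
  by apply: mulr_gt0 => //; exact: exprn_gt0.
have pi0 : pi != 0 :> R by rewrite gt_eqF // pi_gt0.
have sq0 : Num.sqrt (1 - r ^+ 2) != 0.
  rewrite gt_eqF // sqrtr_gt0 lt_neqAle eq_sym r3 /=.
  by rewrite (_ : 1 - r ^+ 2 = (1 - r) * (1 + r)); [apply: mulr_ge0; lra | ring].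
have C0 : 0 <= C.
  by rewrite invr_ge0 mulr_ge0 ?sqrtr_ge0 // mulr_ge0 ?sqr_ge0 // mulr_ge0 // pi_ge0.
have E0 : forall z, curv_k D z * bigauss_density s r z =
    C * (phi a (z.1 - z.2) * psi D b (z.1 + z.2)).
  case=> x w; rewrite /curv_k /bigauss_density /phi /psi /=.
  have -> : - ((x ^+ 2 + w ^+ 2 - 2 * r * x * w) / (2 * s ^+ 2 * (1 - r ^+ 2))) =
     - (a * (x - w) ^+ 2) + - (b * (x + w) ^+ 2).
    rewrite /a /b; field.
    by rewrite r1 r2 r3 s0.
  rewrite expRD /C; move: (@pi R) pi0 => p p0; field.
  rewrite D0 s0 sq0 p0 gt_eqF //; exact: powR_gt0 (inner_gt0 _ _).
have cphi2 : forall c d : R, continuous (fun w => phi a (c * w + d)).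
  move=> c d y; apply: (@continuous_comp _ _ _ (fun w => c * w + d) (phi a)); last exact: phi_cont.
  apply: cvgD; last exact: cvg_cst.
  apply: cvgM; [exact: cvg_cst | exact: cvg_id].
have cpsi2 : forall c d : R, continuous (fun w => psi D b (c * w + d)).
  move=> c d y; apply: (@continuous_comp _ _ _ (fun w => c * w + d) (psi D b)); last exact: psi_cont.
  apply: cvgD; last exact: cvg_cst.
  apply: cvgM; [exact: cvg_cst | exact: cvg_id].
have mphi := continuous_measurable_fun (phi_cont a).
have mpsi := continuous_measurable_fun (psi_cont D b D0).
have Iphi : (\int[lebesgue_measure]_u (phi a u)%:E = (2 * (2 * a)^-1)%:E)%E.
  rewrite even_integral //; last 3 first.
  - exact: phi_cont.
  - exact: phi_ge0.
  - by move=> u; rewrite /phi normrN sqrrN.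
  rewrite EFinM; congr (_ * _)%E; rewrite -half_gauss_moment //.
  apply: eq_integral => u; rewrite inE /= in_itv /= andbT => u0.
  by rewrite /phi ger0_norm.
have mpsi2 : forall c d : R, measurable_fun setT (fun w => psi D b (c * w + d)).
  by move=> c d; exact: continuous_measurable_fun (cpsi2 c d).
have Ipsi : (\int[lebesgue_measure]_v (psi D b v)%:E = (4 * D)%:E *
    \int[lebesgue_measure]_(e in `[0%R, +oo[%classic) (psi D b (2 * D * e + 0))%:E)%E.
  have D2 : 0 < 2 * D by rewrite mulr_gt0.
  have Hev : forall e, psi D b (2 * D * (- e) + 0) = psi D b (2 * D * e + 0).
    by move=> e; rewrite /psi !addr0 mulrN sqrrN.
  rewrite (@subst_affine _ (psi D b) (2 * D) 0 D2 (psi_cont D b D0) (psi_ge0 D b)).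
  rewrite (@even_integral _ (fun e => psi D b (2 * D * e + 0)) (cpsi2 _ _) (fun e => psi_ge0 D b _) Hev).
  by rewrite muleA -EFinM; congr (_ * _)%E; congr EFin; ring.
have IT : (\int[@lebesgue_measure R]_(eta in `[0%R, +oo[%classic)
       ((powR (1 + eta ^+ 2) (3 / 2))^-1 *
        expR (- (D ^+ 2 / (s ^+ 2 * (1 + r))) * eta ^+ 2))%:E =
    (D ^+ 2)%:E * \int[lebesgue_measure]_(e in `[0%R, +oo[%classic) (psi D b (2 * D * e + 0))%:E)%E.
  rewrite -ge0_integralZl_EFin //; last 3 first.
  - by move=> e _; rewrite lee_fin psi_ge0.
  - by apply/measurable_EFinP; apply: measurable_funTS; exact: mpsi2.
  - by rewrite sqr_ge0.
  apply: eq_integral => e _; congr EFin; rewrite /psi addr0.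
  rewrite (_ : (2 * D * e) ^+ 2 / (4 * D ^+ 2) = e ^+ 2); last by field.
  rewrite (_ : - (b * (2 * D * e) ^+ 2) = - (D ^+ 2 / (s ^+ 2 * (1 + r))) * e ^+ 2); last first.
    by rewrite /b; field; rewrite r2 s0.
  field; rewrite D0 gt_eqF //; apply: powR_gt0; have := sqr_ge0 e; lra.
rewrite IT.
have mP1 : measurable_fun [set: measurableTypeR R * measurableTypeR R]
    (fun z : measurableTypeR R * measurableTypeR R => (C * (phi a (z.1 - z.2) * psi D b (z.1 + z.2)))%:E).
  apply/measurable_EFinP; apply: measurable_funM => //; apply: measurable_funM.
  - apply: measurableT_comp mphi _; apply: measurable_funB.
    + exact: measurable_fst.
    + exact: measurable_snd.
  - apply: measurableT_comp mpsi _; apply: measurable_funD.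
    + exact: measurable_fst.
    + exact: measurable_snd.
transitivity (\int[(@lebesgue_measure R) \x (@lebesgue_measure R)]_(z in [set: R * R])
   (C * (phi a (z.1 - z.2) * psi D b (z.1 + z.2)))%:E)%E.
  by apply: eq_integral => z _; rewrite E0.
have P0 : forall z : R * R, (0 <= (C * (phi a (z.1 - z.2) * psi D b (z.1 + z.2)))%:E)%E.
  by move=> z; rewrite lee_fin mulr_ge0 // mulr_ge0 // ?phi_ge0 ?psi_ge0.
etransitivity; first exact: (fubini_tonelli1 _ mP1 P0).
rewrite /fubini_F /=.
transitivity (\int[lebesgue_measure]_x \int[lebesgue_measure]_t
   (C * (phi a (2 * x - t) * psi D b t))%:E)%E.
  apply: eq_integral => x _.
  have cG : continuous (fun w => C * (phi a (x - w) * psi D b (x + w))).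
    move=> y; apply: cvgM; first exact: cvg_cst.
    apply: cvgM.
    + apply: (@continuous_comp _ _ _ (fun w => x - w) (phi a)); last exact: phi_cont.
      by apply: cvgB; [exact: cvg_cst | exact: cvg_id].
    + apply: (@continuous_comp _ _ _ (fun w => x + w) (psi D b)); last exact: psi_cont.
      by apply: cvgD; [exact: cvg_cst | exact: cvg_id].
  have G0 : forall w, 0 <= C * (phi a (x - w) * psi D b (x + w)).
    by move=> w; rewrite mulr_ge0 // mulr_ge0 // ?phi_ge0 ?psi_ge0.
  rewrite (@subst_affine _ _ 1 (- x) ltr01 cG G0).
  rewrite mul1e; apply: eq_integral => t _; congr EFin; rewrite mul1r.
  by congr (C * (phi a _ * psi D b _)); ring.
have mP2 : measurable_fun [set: measurableTypeR R * measurableTypeR R]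
    (fun z : measurableTypeR R * measurableTypeR R =>
       (C * (phi a (2 * z.1 - z.2) * psi D b z.2))%:E).
  apply/measurable_EFinP; apply: measurable_funM => //; apply: measurable_funM.
  - apply: measurableT_comp mphi _; apply: measurable_funB.
    + by apply: measurable_funM => //; exact: measurable_fst.
    + exact: measurable_snd.
  - apply: measurableT_comp mpsi _; exact: measurable_snd.
have P2 : forall z : R * R, (0 <= (C * (phi a (2 * z.1 - z.2) * psi D b z.2))%:E)%E.
  by move=> z; rewrite lee_fin mulr_ge0 // mulr_ge0 // ?phi_ge0 ?psi_ge0.
etransitivity; first exact: (fubini_tonelli _ mP2 P2).
rewrite /=.
transitivity (\int[lebesgue_measure]_t (((2^-1 * C * (2 * (2 * a)^-1)) * psi D b t)%:E))%E.
  apply: eq_integral => t _.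
  have h2 : 0 < 2^-1 :> R by rewrite invr_gt0.
  have cG : continuous (fun x : R => C * (phi a (2 * x - t) * psi D b t)).
    move=> y; apply: cvgM; first exact: cvg_cst.
    apply: cvgM; last exact: cvg_cst.
    exact: (cphi2 2 (- t) y).
  have G0 : forall w : R, 0 <= C * (phi a (2 * w - t) * psi D b t).
    by move=> w; rewrite mulr_ge0 // mulr_ge0 // ?phi_ge0 ?psi_ge0.
  rewrite (@subst_affine _ _ (2^-1) (t / 2) h2 cG G0).
  transitivity ((2^-1)%:E * \int[lebesgue_measure]_u ((C * psi D b t)%:E * (phi a u)%:E))%E.
    congr (_ * _)%E; apply: eq_integral => u _; rewrite -EFinM; congr EFin.
    have -> : 2 * (2^-1 * u + t / 2) - t = u by field.
    by ring.
  rewrite ge0_integralZl_EFin //; last 3 first.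
  - by move=> u _; rewrite lee_fin phi_ge0.
  - exact/measurable_EFinP.
  - by rewrite mulr_ge0 // psi_ge0.
  by rewrite Iphi -!EFinM; congr EFin; ring.
under eq_integral do rewrite EFinM.
rewrite ge0_integralZl_EFin //; last 3 first.
- by move=> t _; rewrite lee_fin psi_ge0.
- exact/measurable_EFinP.
- apply: mulr_ge0; first by rewrite mulr_ge0.
  by rewrite divr_ge0 // mulr_ge0 // ltW.
rewrite Ipsi !muleA -!EFinM; congr (_ * _)%E; congr EFin.
rewrite /C /a.
have hp : Num.sqrt (1 - r) ^+ 2 = 1 - r by rewrite sqr_sqrtr //; lra.
rewrite -[X in 4 * s ^+ 2 * X]hp.
have hrm : 0 <= 1 - r by lra.
have hrp : 0 <= 1 + r by lra.
have -> : Num.sqrt (1 - r ^+ 2) = Num.sqrt (1 - r) * Num.sqrt (1 + r).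
  by rewrite -sqrtrM //; congr Num.sqrt; ring.
have -> : Num.sqrt ((1 - r) / (1 + r)) = Num.sqrt (1 - r) / Num.sqrt (1 + r).
  by rewrite sqrtrM ?sqrtrV.
have p0 : Num.sqrt (1 - r) != 0 by rewrite gt_eqF // sqrtr_gt0; lra.
have q0 : Num.sqrt (1 + r) != 0 by rewrite gt_eqF // sqrtr_gt0; lra.
move: (Num.sqrt (1 - r)) (Num.sqrt (1 + r)) p0 q0 (@pi R) pi0 => p q p0' q0' pp pp0.
by field; rewrite q0' D0 pp0 p0' s0.
Qed.
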